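(* Let $K$ be a field, let $e_1,\dots,e_m$ be a basis of $K^m$, and let $T_1,\dots,T_k:K^m\to K^n$ be linear maps. Suppose that for every $l$ and every choice of distinct indices $i_1,\dots,i_l\in\{1,\dots,m\}$, the span of the vectors $\{T_j(e_{i_t}): 1\le t\le l,\ 1\le j\le k\}$ has dimension at least $2l$. Then there exist functions $\phi,\psi:\{1,\dots,m\}\to\{1,\dots,k\}$ such that the $2m$ vectors $T_{\phi(1)}(e_1),\dots,T_{\phi(m)}(e_m),T_{\psi(1)}(e_1),\dots,T_{\psi(m)}(e_m)$ are linearly independent. *)

(* Defs.v *)
From mathcomp Require Import all_boot all_algebra.
Set Implicit Arguments. Unset Strict Implicit. Unset Printing Implicit Defensive.
Import GRing.Theory.
Local Open Scope ring_scope.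
Local Open Scope vspace_scope.

Definition images (K : fieldType) (m n k : nat)
  (e : 'I_m -> 'rV[K]_m) (T : 'I_k -> 'Hom('rV[K]_m, 'rV[K]_n))
  (S : {set 'I_m}) : seq 'rV[K]_n :=
  [seq T j (e i) | i <- enum S, j <- enum 'I_k].

(* Main.v *)
Require Import Defs.
From mathcomp Require Import all_boot all_algebra zify.
Set Implicit Arguments. Unset Strict Implicit. Unset Printing Implicit Defensive.
Import GRing.Theory.
Local Open Scope ring_scope.
Local Open Scope vspace_scope.

Section Rado.
Variables (K : fieldType) (vT : vectType K) (I : finType).

Definition SJ (F : I -> seq vT) (J : {set I}) : {vspace vT} :=
  (\sum_(i in J) <<F i>>)%VS.
Definition hall F := forall J : {set I}, (#|J| <= \dim (SJ F J))%N.

Lemma rado_base F : hall F -> (forall i, size (F i) <= 1)%N ->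
  exists x : I -> vT, (forall i, x i \in F i) /\ free (map x (enum I)).
Proof.
move=> hF hs.
have ne i : F i = [:: head (0%R:vT) (F i)].
  have := hF [set i]; rewrite cards1 /SJ big_set1.
  have := hs i; case: (F i) => [|a [|b s]] //=.
  by rewrite span_nil dimv0.
exists (fun i => head (0%R:vT) (F i)); split.
  by move=> i; rewrite {2}(ne i) mem_seq1.
rewrite /free size_map -cardE eqn_leq.
have E : <<[seq head (0%R:vT) (F i) | i <- enum I]>> = SJ F setT.
  rewrite span_def big_map /SJ big_enum_cond /=.
  apply: eq_big => [i|i _]; first by rewrite inE.
  by rewrite {2}(ne i) span_seq1.
apply/andP; split; last by rewrite E; have := hF setT; rewrite cardsT.
apply: leq_trans (dim_span _) _.
by rewrite size_map -cardE.
Qed.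

Lemma rado_step F i0 x1 x2 r : F i0 = [:: x1, x2 & r] -> hall F ->
  hall (fun i => if i == i0 then x2 :: r else F i) \/
  hall (fun i => if i == i0 then x1 :: r else F i).
Proof.
move=> Fi0 hF.
set F1 := fun i => if i == i0 then x2 :: r else F i.
set F2 := fun i => if i == i0 then x1 :: r else F i.
have hallb G : hall G <-> [forall J : {set I}, #|J| <= \dim (SJ G J)]%N.
  by split => [h|/forallP h J]; [apply/forallP|].
case: (boolP [forall J : {set I}, #|J| <= \dim (SJ F1 J)]%N) => [h|].
  by left; apply/hallb.
move/forallPn => [J1]; rewrite -ltnNge => h1.
case: (boolP [forall J : {set I}, #|J| <= \dim (SJ F2 J)]%N) => [h|].
  by right; apply/hallb.
move/forallPn => [J2]; rewrite -ltnNge => h2.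
exfalso.
have out G (J : {set I}) : (forall i, i != i0 -> G i = F i) -> i0 \notin J -> SJ G J = SJ F J.
  move=> eG nJ; apply: eq_bigr => i iJ; rewrite eG //.
  by apply: (contraNneq _ nJ) => e; rewrite -e.
have iJ1 : i0 \in J1.
  apply: contraTT h1 => nJ; rewrite -leqNgt out //.
  by move=> i ne; rewrite /F1 (negbTE ne).
have iJ2 : i0 \in J2.
  apply: contraTT h2 => nJ; rewrite -leqNgt out //.
  by move=> i ne; rewrite /F2 (negbTE ne).
set U := SJ F1 J1. set V := SJ F2 J2.
have inU : (<<F1 i0>> <= U)%VS by apply: (sumv_sup i0).
have inV : (<<F2 i0>> <= V)%VS by apply: (sumv_sup i0).
have sUV : (SJ F (J1 :|: J2) <= U + V)%VS.
  apply/subv_sumP => i; rewrite inE; case: (eqVneq i i0) => [-> _ | ne /orP[iJ|iJ]].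
  - rewrite Fi0; apply/span_subvP => y; rewrite !in_cons => /or3P [/eqP->|/eqP->|yr].
    + apply: (subvP (addvSr U V)); apply: (subvP inV); apply: memv_span.
      by rewrite /F2 eqxx mem_head.
    + apply: (subvP (addvSl U V)); apply: (subvP inU); apply: memv_span.
      by rewrite /F1 eqxx mem_head.
    + apply: (subvP (addvSl U V)); apply: (subvP inU); apply: memv_span.
      by rewrite /F1 eqxx in_cons yr orbT.
  - apply: subv_trans (addvSl U V); apply: (sumv_sup i) => //.
    by rewrite /F1 (negbTE ne).
  - apply: subv_trans (addvSr U V); apply: (sumv_sup i) => //.
    by rewrite /F2 (negbTE ne).
have sUV2 : (SJ F ((J1 :&: J2) :\ i0) <= U :&: V)%VS.
  rewrite subv_cap; apply/andP; split; apply/subv_sumP => i;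
    rewrite !inE => /andP [ne /andP [a b]]; apply: (sumv_sup i) => //.
    by rewrite /F1 (negbTE ne).
  by rewrite /F2 (negbTE ne).
have := dimv_sum_cap U V. have := dimvS sUV. have := dimvS sUV2.
have := hF (J1 :|: J2). have := hF ((J1 :&: J2) :\ i0).
have := cardsUI J1 J2. have := cardsD1 i0 (J1 :&: J2).
rewrite inE iJ1 iJ2 /=. rewrite -/U -/V in h1 h2.
lia.
Qed.

Lemma sum_upd (F : I -> seq vT) (i0 : I) (s : seq vT) :
  (\sum_(i : I) size ((fun i => if i == i0 then s else F i) i) =
   size s + \sum_(i | i != i0) size (F i))%N.
Proof.
rewrite (bigD1 i0) //= eqxx; congr (_ + _)%N.
by apply: eq_bigr => i ne; rewrite (negbTE ne).
Qed.

Lemma rado_gen F : hall F ->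
  exists x : I -> vT, (forall i, x i \in F i) /\ free (map x (enum I)).
Proof.
move: {2}(\sum_i size (F i))%N (leqnn (\sum_i size (F i))%N) => N.
elim: N F => [|N IH] F hN hF;
  (case: (boolP [exists i, 1 < size (F i)]%N) => [/existsP [i0 hi]|/existsPn hs];
   [| apply: rado_base => // i; by rewrite leqNgt hs]).
  by rewrite (bigD1 i0) //= in hN; lia.
case eF : (F i0) hi => [|x1 [|x2 r]] // _.
rewrite (bigD1 i0) //= eF /= in hN.
have [h|h] := rado_step eF hF.
  have [|x [xm fx]] := IH _ _ h.
    by rewrite sum_upd /=; lia.
  exists x; split => // i; have := xm i; case: eqP => [->|] //.
  by rewrite eF !in_cons => ->; rewrite !orbT.
have [|x [xm fx]] := IH _ _ h.
  by rewrite sum_upd /=; lia.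
exists x; split => // i; have := xm i; case: eqP => [->|] //.
rewrite eF !in_cons => /orP [->|->] //; by rewrite !orbT.
Qed.

End Rado.
Theorem lemma6 (K : fieldType) (m n k : nat)
  (e : 'I_m -> 'rV[K]_m) (T : 'I_k -> 'Hom('rV[K]_m, 'rV[K]_n)) :
  basis_of fullv [seq e i | i <- enum 'I_m] ->
  (forall S : {set 'I_m}, (2 * #|S| <= \dim <<images e T S>>)%N) ->
  exists phi psi : 'I_m -> 'I_k,
    free ([seq T (phi i) (e i) | i <- enum 'I_m] ++
          [seq T (psi i) (e i) | i <- enum 'I_m]).
Proof.
move=> _ hyp.
pose F := fun p : bool * 'I_m => [seq T j (e p.2) | j <- enum 'I_k].
have hF : hall F.
  move=> J; pose S := [set p.2 | p in J].
  apply: (@leq_trans (2 * #|S|)).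
    have : J \subset setX [set: bool] S.
      apply/subsetP => p pJ; rewrite inE /= in_setT /=.
      exact: imset_f.
    by move/subset_leq_card; rewrite cardsX cardsT card_bool.
  apply: leq_trans (hyp S) _; apply: dimvS; apply/span_subvP => y.
  case/allpairsP => [[i j] /= [iS _ ->]].
  move: iS; rewrite mem_enum => /imsetP [p pJ ->].
  apply: (subvP (_ : <<F p>> <= SJ F J)%VS); first by apply: (sumv_sup p).
  by apply: memv_span; apply: map_f; rewrite mem_enum.
have [x [xm fx]] := rado_gen hF.
have ex b i : exists j, x (b, i) = T j (e i).
  by have := xm (b, i); case/mapP => j _ ->; exists j.
have [phi hphi] := fin_all_exists (ex true).
have [psi hpsi] := fin_all_exists (ex false).
exists phi, psi.
have -> : [seq T (phi i) (e i) | i <- enum 'I_m] ++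
          [seq T (psi i) (e i) | i <- enum 'I_m] =
          map x ([seq (true, i) | i <- enum 'I_m] ++ [seq (false, i) | i <- enum 'I_m]).
  rewrite map_cat -!map_comp; congr (_ ++ _); apply: eq_map => i /=; by rewrite ?hphi ?hpsi.
rewrite (perm_free (Y := map x (enum ((bool * 'I_m)%type : predArgType)))) //.
apply: perm_map; apply: uniq_perm.
- rewrite cat_uniq !map_inj_uniq ?enum_uniq //=; try by move=> a b [].
  rewrite -enumT enum_uniq /= andbT.
  apply/hasPn => p /mapP [i _ ->]; apply/negP => /mapP [j _ []] //.
- exact: enum_uniq.
- case=> b i; rewrite mem_cat mem_enum.
  case: b.
    by rewrite (map_f (fun j => (true, j))) ?mem_enum.
  by rewrite (map_f (fun j => (false, j))) ?mem_enum ?orbT.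
Qed.
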